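(* Let $k\ge1$ and let $A_k$ be a $k$-atom with $n$ vertices. Then \[ \lambda_1(A_k) \geq \frac{k\sqrt{k}}{4\sqrt{n}} - 2. \]
   Context: $\lambda_1(H)$ denotes the largest eigenvalue of the adjacency matrix of a graph $H$. $k$-atoms are defined recursively: $K_1$ is the only $1$-atom. A graph $H$ is a $(k+1)$-atom if its vertices can be partitioned into an independent set $I$ and a set inducing a $k$-atom $A_k$ such that each vertex of $A_k$ has exactly one neighbor in $I$ and each vertex of $I$ has at least one neighbor in $A_k$. *)

(* Defs.v *)
From HB Require Import structures.
From mathcomp Require Import all_boot all_order all_algebra.
From mathcomp Require Import boolp classical_sets reals.
Set Implicit Arguments. Unset Strict Implicit. Unset Printing Implicit Defensive.
Import Order.TTheory GRing.Theory Num.Theory.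

(* A finite simple graph: vertex type T : finType, edge relation e
   (assumed symmetric and irreflexive in the theorem). *)

Definition independent (T : finType) (e : rel T) (I : {set T}) : Prop :=
  forall u v, u \in I -> v \in I -> ~~ e u v.

(* is_atom e k S : the subgraph of (T,e) induced by S is a k-atom. *)
Fixpoint is_atom (T : finType) (e : rel T) (k : nat) (S : {set T}) {struct k} : Prop :=
  match k with
  | 0 => False
  | k'.+1 =>
    if k' is 0 then #|S| = 1%N else
      exists (I A : {set T}),
        [/\ [disjoint I & A], I :|: A = S, independent e I /\
            is_atom e k' A,
            (forall v, v \in A -> #|[set u in I | e v u]| = 1%N) &
            (forall u, u \in I -> exists2 v, v \in A & e u v)]
  end.

Local Open Scope ring_scope.

Definition adjmx (R : nzRingType) (T : finType) (e : rel T) : 'M[R]_#|T| :=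
  \matrix_(i, j) (e (enum_val i) (enum_val j))%:R.

Definition lambda1 (R : realType) (n : nat) (M : 'M[R]_n) : R :=
  sup [set x : R | eigenvalue M x].

(* Main.v *)
Require Import Defs.
From HB Require Import structures.
From mathcomp Require Import all_boot all_order all_algebra.
From mathcomp Require Import boolp classical_sets reals.
From mathcomp Require Import complex lra zify.
Import Order.TTheory GRing.Theory Num.Theory Num.Def.
Local Open Scope ring_scope.
Section Spec.
Variable R : realType.
Local Notation C := (R[i]).
Local Notation toC := (real_complex R).

Lemma toC_real (r : R) : (toC r : C) \is Num.real.
Proof. by apply/complex_realP; exists r. Qed.

Set Printing Coercions.
Lemma rayleigh n (A : 'M[R]_n) : A^T = A -> (0 < n)%N ->
  exists mu, eigenvalue A mu /\
    forall x : 'rV[R]_n, (x *m A *m x^T) 0 0 <= mu * (x *m x^T) 0 0.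
Proof.
move=> Asym hn.
pose Ac := map_mx toC A.
have realAc : Ac \is a realmx by apply/mxOverP => i j; rewrite mxE toC_real.
have symAc : Ac \is symmetricmx.
  by apply/is_hermitianmxP; rewrite expr0 scale1r map_mx_id // /Ac map_trmx Asym.
have hAc := realsym_hermsym symAc realAc.
have /orthomx_spectralP eqA := hermitian_normalmx hAc.
set P := spectralmx Ac in eqA; set d := spectral_diag Ac in eqA.
have Pu : P \is unitarymx := spectral_unitarymx Ac.
have Punit : P \in unitmx := spectral_unit Ac.
have dreal := hermitian_spectral_diag_real hAc.
have dR i : toC (complex.Re (d 0 i)) = d 0 i.
  by apply: RRe_real; move/mxOverP: dreal; apply.
pose i0 := Ordinal hn.
pose j := [arg max_(i > i0) complex.Re (d 0 i)]%O.
have jmax i : complex.Re (d 0 i) <= complex.Re (d 0 j).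
  by rewrite /j; case: arg_maxP => // k _ H; apply: H.
exists (complex.Re (d 0 j)); split.
  rewrite eigenvalue_root_char -(fmorph_root toC) map_char_poly.
  rewrite -eigenvalue_root_char -/Ac.
  suff Hj : eigenvalue Ac (d 0 j) by move: Hj; rewrite -dR; apply.
  apply/eigenvalueP; exists (row j P).
    rewrite {1}eqA !mulmxA rowE -(mulmxA _ P) mulmxV // mulmx1 -rowE.
    by rewrite -[delta_mx 0 j *m diag_mx d]rowE row_diag_mx -scalemxAl -rowE.
  apply/eqP => /(congr1 (mulmx^~ (invmx P))).
  rewrite rowE -mulmxA mulmxV // mulmx1 mul0mx => /matrixP /(_ 0 j).
  by rewrite !mxE /= eqxx; move/eqP; rewrite pnatr_eq0.
move=> x.
rewrite -lecR.
pose xc := map_mx toC x.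
have xcJ : map_mx conjC xc = xc.
  by apply/matrixP => a b; rewrite !mxE conj_Creal // toC_real.
have e1 : toC ((x *m A *m x^T) 0 0) = (xc *m Ac *m xc^T) 0 0.
  by rewrite /xc map_trmx /Ac -!map_mxM [RHS]mxE.
have e2 : toC ((x *m x^T) 0 0) = (xc *m xc^T) 0 0.
  by rewrite /xc map_trmx -!map_mxM [RHS]mxE.
rewrite (_ : toC (_ * _) = toC (complex.Re (d 0 j)) * toC ((x *m x^T) 0 0)); last exact: rmorphM.
rewrite e1 e2 dR.
have PJ : invmx P = map_mx conjC (trmx P) by rewrite invmx_unitary.
pose y := xc *m invmx P.
have ey : map_mx conjC (trmx y) = P *m xc^T.
  by rewrite /y trmx_mul map_mxM PJ trmxCK -map_trmx xcJ.
have ex1 : xc *m Ac *m xc^T = y *m diag_mx d *m map_mx conjC (trmx y).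
  by rewrite ey {1}eqA /y !mulmxA.
have ex2 : xc *m xc^T = y *m map_mx conjC (trmx y).
  by rewrite ey /y !mulmxA -(mulmxA xc) mulVmx // mulmx1.
rewrite ex1 ex2 mul_mx_diag. rewrite [X in X <= _]mxE [X in _ <= _ * X]mxE mulr_sumr; apply: ler_sum => k _.
rewrite !mxE; set s := (\sum_(j0 < n) _).
have hs : 0 <= s * s^* := mul_conjC_ge0 s.
rewrite [X in X <= _]mulrAC [X in _ <= X]mulrC; apply: (ler_wpM2l hs).
by rewrite -(dR k) -(dR j) lecR jmax.
Qed.


End Spec.
Section G.
Variables (R : realType) (T : finType) (e : rel T).
Hypothesis e_sym : symmetric e.
Hypothesis e_irr : irreflexive e.

Definition Pc (X : {set T}) : nat := (\sum_(u in X) \sum_(v in X) e u v)%N.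
Definition ind (X : {set T}) : 'rV[R]_#|T| := \row_i ((enum_val i \in X)%:R).

Lemma ind_norm X : ((ind X) *m (ind X)^T) 0 0 = #|X|%:R.
Proof.
rewrite mxE.
transitivity (\sum_(u in T) ((u \in X)%:R * (u \in X)%:R : R)).
  by rewrite (big_enum_val (A:=T)) /=; apply: eq_bigr => i _; rewrite !mxE.
rewrite -sum1_card natr_sum [RHS]big_mkcond /=; apply: eq_bigr => u _.
by case: (u \in X); rewrite ?mulr1 ?mulr0.
Qed.

Lemma ind_quad X : ((ind X) *m adjmx R e *m (ind X)^T) 0 0 = (Pc X)%:R.
Proof.
rewrite mxE /Pc natr_sum.
transitivity (\sum_(u in T) \sum_(v in T) ((v \in X)%:R * (e v u)%:R * (u \in X)%:R : R)).
  rewrite (big_enum_val (A:=T)) /=; apply: eq_bigr => i _; rewrite !mxE.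
  rewrite (big_enum_val (A:=T)) /= big_distrl /=; apply: eq_bigr => j _; rewrite !mxE.
  done.
rewrite exchange_big [RHS]big_mkcond /=; apply: eq_big => // v _.
case: (v \in X); last by rewrite big1 // => u _; rewrite !mul0r.
rewrite natr_sum [RHS]big_mkcond /=; apply: eq_big => // u _.
by case: (u \in X); rewrite ?mulr1 ?mulr0 ?mul1r ?mul0r.
Qed.

Lemma sum_e u (I : {set T}) : (\sum_(v in I) e u v)%N = #|[set v in I | e u v]|.
Proof.
rewrite -sum1_card [RHS]big_mkcond [LHS]big_mkcond; apply: eq_bigr => v _.
by rewrite !inE; case: (v \in I); case: (e u v).
Qed.

Lemma sumU (I A : {set T}) (F : T -> nat) : [disjoint I & A] ->
  (\sum_(u in I :|: A) F u = \sum_(u in I) F u + \sum_(u in A) F u)%N.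
Proof.
move=> dis; rewrite -bigU //; apply: eq_bigl => x; by rewrite !inE.
Qed.

Lemma Pc_split (I A : {set T}) : [disjoint I & A] ->
  (forall v, v \in A -> #|[set u in I | e v u]| = 1%N) ->
  (Pc A + 2 * #|A| <= Pc (I :|: A))%N.
Proof.
move=> dis one.
rewrite /Pc sumU //.
have sp u : (\sum_(v in I :|: A) e u v = \sum_(v in I) e u v + \sum_(v in A) e u v)%N.
  exact: sumU.
rewrite [X in (_ <= X + _)%N](eq_bigr _ (fun u _ => sp u)).
rewrite [X in (_ <= _ + X)%N](eq_bigr _ (fun u _ => sp u)).
rewrite !big_split /=.
have h1 : (\sum_(u in A) \sum_(v in I) e u v)%N = #|A|.
  rewrite -sum1_card; apply: eq_bigr => u uA; by rewrite sum_e one.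
have h2 : (\sum_(u in I) \sum_(v in A) e u v)%N = #|A|.
  rewrite exchange_big /= -sum1_card; apply: eq_bigr => u uA.
  by rewrite -(one u uA) -sum_e; apply: eq_bigr => v _; rewrite e_sym.
rewrite h1 h2; lia.
Qed.

Lemma atom_bound (lam : R) (lam0 : 0 <= lam)
  (H : forall X, (Pc X)%:R <= lam * #|X|%:R) k :
  forall S, is_atom e k.+1 S ->
  [/\ (k.+1 <= #|S|)%N, (k.+1 * k <= Pc S)%N &
      2 * k.+1%:R * k%:R * (k%:R - 1) <= 3 * lam * (Pc S)%:R].
Proof.
elim: k => [|k IH] S /=.
  move=> hS; split; first by rewrite hS.
    by [].
  by rewrite mulr0 mul0r; apply: mulr_ge0 => //; apply: mulr_ge0.
move=> [I [A [dis U [indep atA] one cov]]].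
have [hA1 hA2 hA3] := IH A atA.
have [v vA] : exists v, v \in A.
  by apply/card_gt0P; apply: leq_trans hA1.
have [u uI] : exists u, u \in [set u in I | e v u].
  by apply/card_gt0P; rewrite one.
have uI' : u \in I by move: uI; rewrite inE => /andP[].
have uA : u \notin A.
  by rewrite (disjointFr dis uI').
have hS1 : (k.+2 <= #|S|)%N.
  apply: leq_trans (_ : #|u |: A| <= #|S|)%N.
    by rewrite cardsU1 uA.
  by apply: subset_leq_card; rewrite -U; apply/fintype.subsetP => x; rewrite !inE => /orP[/eqP->|->]; rewrite ?uI' ?orbT.
have hP := Pc_split I A dis one; rewrite U in hP.
split => //; first by lia.
have hA := H A.
have hPr : (Pc A)%:R + 2 * #|A|%:R <= (Pc S)%:R :> R.
  by move: hP; rewrite -(ler_nat R) natrD natrM.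
have hA2r : k.+1%:R * k%:R <= (Pc A)%:R :> R by rewrite -natrM ler_nat.
have := mulr_ge0 lam0 (_ : 0 <= (Pc S)%:R - ((Pc A)%:R + 2 * #|A|%:R)).
rewrite subr_ge0 => /(_ hPr) hm.
rewrite -?natr1 in hA3 hA2r *.
nra.
Qed.
End G.

Section Main.
Variable R : realType.

Lemma vvT_gt0 n (v : 'rV[R]_n) : v != 0 -> 0 < (v *m v^T) 0 0.
Proof.
move=> vN0.
have [i vi] : exists i, v 0 i != 0.
  apply/existsP; apply: contraR vN0; rewrite negb_exists => /forallP H.
  by apply/eqP/matrixP => a b; rewrite ord1 mxE; move: (H b); rewrite negbK => /eqP.
rewrite mxE (bigD1 i) //=.
have h1 : 0 < v 0 i * v^T i 0.
  by rewrite mxE -expr2 lt_def sqrf_eq0 vi sqr_ge0.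
have h2 : 0 <= \sum_(j < n | j != i) v 0 j * v^T j 0.
  by apply: sumr_ge0 => j _; rewrite mxE -expr2 sqr_ge0.
lra.
Qed.

Lemma rayleigh_sup n (A : 'M[R]_n) : A^T = A -> (0 < n)%N ->
  forall x : 'rV[R]_n, (x *m A *m x^T) 0 0 <= lambda1 A * (x *m x^T) 0 0.
Proof.
move=> Asym hn.
have [mu [emu Hmu]] := @rayleigh R n A Asym hn.
have ub : forall a, eigenvalue A a -> a <= mu.
  move=> a /eigenvalueP [v vA vN0].
  have := Hmu v; rewrite vA -scalemxAl mxE.
  by rewrite ler_pM2r // vvT_gt0.
have mule : mu <= lambda1 A.
  apply: ub_le_sup => //; exists mu => a /= ha; exact: ub.
move=> x; apply: le_trans (Hmu x) _; apply: ler_wpM2r => //.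
by rewrite mxE; apply: sumr_ge0 => j _; rewrite mxE -expr2 sqr_ge0.
Qed.
End Main.

Lemma atom_card (T : finType) (e : rel T) k : forall S, is_atom e k.+1 S -> (0 < #|S|)%N.
Proof.
elim: k => [|k IH] S /=; first by move=> ->.
move=> [I [A [dis U [indep atA] one cov]]].
apply: leq_trans (IH A atA) _; apply: subset_leq_card; rewrite -U.
by apply/fintype.subsetP => x; rewrite !inE => ->; rewrite orbT.
Qed.

Theorem lemma5 (R : realType) (T : finType) (e : rel T)
  (e_sym : symmetric e) (e_irr : irreflexive e) (k : nat) (hk : (1 <= k)%N)
  (hatom : is_atom e k [set: T]) :
  (k%:R * Num.sqrt (k%:R : R)) / (4 * Num.sqrt (#|T|%:R)) - 2
    <= lambda1 (adjmx R e).
Proof.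
case: k hk hatom => // k _ hatom.
have hn : (0 < #|T|)%N by rewrite -cardsT; exact: atom_card hatom.
have Asym : (adjmx R e)^T = adjmx R e by apply/matrixP => i j; rewrite !mxE e_sym.
set lam := lambda1 (adjmx R e).
have H X : (Pc T e X)%:R <= lam * #|X|%:R :> R.
  by rewrite -(ind_quad R T e X) -(ind_norm R T X) rayleigh_sup.
have lam0 : 0 <= lam.
  have [v _] : exists v : T, true by apply/existsP; rewrite -cardsT card_gt0 in hn; case/set0Pn: hn => v _; apply/existsP; exists v.
  have := H [set v]; by rewrite /Pc !big_set1 e_irr cards1 mulr1.
have [h1 h2 h3] := @atom_bound R T e e_sym lam lam0 H k _ hatom.
have hT := H [set: T]; rewrite cardsT in h1 hT.
rewrite -natr1 in h3.
set P := (Pc T e [set: T])%:R in h3 hT.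
set K := k.+1%:R : R.
set N := #|T|%:R : R.
have hK1 : 1 <= K by rewrite /K ler1n.
have hKN : K <= N by rewrite /K /N ler_nat.
have hkK : k%:R = K - 1 by rewrite /K -natr1 addrK.
rewrite hkK -/K in h3.
have hm : 0 <= lam * (lam * N - P) by apply: mulr_ge0 => //; rewrite subr_ge0.
have hq : 2 * K * (K - 1) * (K - 2) <= 3 * lam ^+ 2 * N by nra.
have hN0 : 0 < N by lra.
have hlN : 0 <= lam * N by apply: mulr_ge0 => //; lra.
have hK2 : 0 <= K * (K - 2) ^+ 2 by apply: mulr_ge0; [lra | apply: sqr_ge0].
rewrite lerBlDr ler_pdivrMr; last by rewrite mulr_gt0 // sqrtr_gt0.
rewrite -(@ler_pXn2r _ 2) //; last first.
- by rewrite nnegrE; apply: mulr_ge0; [lra | apply: mulr_ge0; [lra | exact: sqrtr_ge0]].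
- by rewrite nnegrE; apply: mulr_ge0; [lra | exact: sqrtr_ge0].
rewrite !exprMn !sqr_sqrtr; [|lra|lra].
nra.
Qed.
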